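(* Let the number of buffer lanes satisfy $L>1$, the number of colors satisfy $C>1$, and the lane width satisfy $W>1$. Then for every $n\in\mathbb{N}$ there exists an upstream sequence of colors $c_1,\dots,c_N\in\{1,\dots,C\}$ such that the minimum number of color changes achievable under the ``store-then-retrieve'' regime is at least $n$ larger than the minimum number of color changes achievable under ``flexible storage and retrieval''.
   Context: Paint shop problem with a multi-lane buffer: an upstream sequence of $N$ cars with colors $c_1,\dots,c_N\in\{1,\dots,C\}$ is processed in order. The buffer consists of $L$ lanes, each a first-in-first-out queue of capacity $W$. At each step exactly one operation is performed: either a store operation, which removes the first remaining car of the upstream sequence and appends it to the back of a lane that is not full; or a retrieve operation, which removes the front car of a nonempty lane and appends it to the end of the downstream sequence. The process ends when the upstream sequence and the buffer are both empty, so the downstream sequence is a permutation of the $N$ cars. The number of color changes of a solution is the number of indices $k$ with $1\le k<N$ such that the $k$-th and $(k+1)$-st cars of the downstream sequence have different colors. Under ``flexible storage and retrieval'', store and retrieve operations may be performed in any order (whenever valid). Under ``store-then-retrieve'', starting from an empty buffer the operations alternate in phases: a storage phase in which cars are stored until the buffer is completely full (or the upstream sequence is exhausted), followed by a retrieval phase in which cars are retrieved until the buffer is completely empty; these phases repeat until all cars have been processed. In each regime, the minimum is taken over all valid operation sequences obeying that regime. *)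

(* Defs.v *)
From mathcomp Require Import all_boot.
Set Implicit Arguments. Unset Strict Implicit. Unset Printing Implicit Defensive.

(* Cars are represented by their colors (natural numbers); only colors matter
   for counting color changes. *)

(* Buffer operations; the nat argument is the lane index (0 <= i < L). *)
Inductive op := Store of nat | Retrieve of nat.

(* State: remaining upstream sequence, the lanes (front of each FIFO lane is
   the head of the list), downstream sequence produced so far. *)
Record state := mkState { upstream : seq nat; lanes : seq (seq nat); downstream : seq nat }.

Definition init_state (L : nat) (cs : seq nat) : state :=
  mkState cs (nseq L [::]) [::].

Definition step (L W : nat) (o : op) (s : state) : option state :=
  match o with
  | Store i =>
      match upstream s with
      | [::] => None
      | c :: u =>
          if (i < L) && (size (nth [::] (lanes s) i) < W) then
            Some (mkState u (set_nth [::] (lanes s) i (rcons (nth [::] (lanes s) i) c))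
                          (downstream s))
          else None
      end
  | Retrieve i =>
      if i < L then
        match nth [::] (lanes s) i with
        | [::] => None
        | c :: rest =>
            Some (mkState (upstream s) (set_nth [::] (lanes s) i rest)
                          (rcons (downstream s) c))
        end
      else None
  end.

Fixpoint run (L W : nat) (ops : seq op) (s : state) : option state :=
  match ops with
  | [::] => Some s
  | o :: os => match step L W o s with
               | None => None
               | Some s' => run L W os s'
               end
  end.

Definition buffer_empty (s : state) : bool := all (fun l => l == [::]) (lanes s).
Definition buffer_full (W : nat) (s : state) : bool := all (fun l => size l == W) (lanes s).

Definition finished (s : state) : bool := (upstream s == [::]) && buffer_empty s.

Definition flex_solution (L W : nat) (cs : seq nat) (out : seq nat) : Prop :=
  exists ops, exists s, run L W ops (init_state L cs) = Some s /\ finished s /\ downstream s = out.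

(* Store-then-retrieve: a phase flag (true = storage phase, false = retrieval
   phase).  The storage phase ends as soon as the buffer is full
   or the upstream sequence is exhausted; the retrieval phase ends as soon as
   the buffer is empty. *)
Definition step_str (L W : nat) (o : op) (ps : bool * state) : option (bool * state) :=
  let: (storing, s) := ps in
  match o with
  | Store _ =>
      if storing then
        match step L W o s with
        | None => None
        | Some s' => Some (~~ (buffer_full W s' || (upstream s' == [::])), s')
        end
      else None
  | Retrieve _ =>
      if storing then None
      else
        match step L W o s with
        | None => None
        | Some s' => Some (buffer_empty s', s')
        end
  end.

Fixpoint run_str (L W : nat) (ops : seq op) (ps : bool * state) : option (bool * state) :=
  match ops with
  | [::] => Some ps
  | o :: os => match step_str L W o ps with
               | None => None
               | Some ps' => run_str L W os ps'
               end
  end.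

Definition str_solution (L W : nat) (cs : seq nat) (out : seq nat) : Prop :=
  exists ops, exists ps, run_str L W ops (true, init_state L cs) = Some ps
    /\ finished ps.2 /\ downstream ps.2 = out.

Definition color_changes (s : seq nat) : nat :=
  match s with
  | [::] => 0
  | _ :: t => count (fun p => p.1 != p.2) (zip s t)
  end.

Definition is_min_changes (sol : seq nat -> Prop) (k : nat) : Prop :=
  (exists out, sol out /\ color_changes out = k) /\
  (forall out, sol out -> k <= color_changes out).

(* Main.v *)
From Stdlib Require Import Classical.
Require Import Defs.
From mathcomp Require Import all_boot zify.
Set Implicit Arguments. Unset Strict Implicit. Unset Printing Implicit Defensive.


Lemma run_cat L W o1 o2 s :
  run L W (o1 ++ o2) s = match run L W o1 s with Some s' => run L W o2 s' | None => None end.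
Proof.
elim: o1 s => [|o os IH] s //=. case: (step L W o s) => // s'.
Qed.

Lemma run_str_cat L W o1 o2 s :
  run_str L W (o1 ++ o2) s = match run_str L W o1 s with Some s' => run_str L W o2 s' | None => None end.
Proof.
elim: o1 s => [|o os IH] s //=. case: (step_str L W o s) => // s'.
Qed.

Lemma ex_min (P : nat -> Prop) : (exists k, P k) -> exists k, P k /\ forall j, P j -> k <= j.
Proof.
case=> k0 Pk0.
suff H : forall n k, k <= n -> P k -> exists k, P k /\ forall j, P j -> k <= j.
  exact: (H k0 k0).
elim=> [|n IH] k Hk Pk.
  exists k; split=> // j _; lia.
case: (classic (exists j, j < k /\ P j)) => [[j [Hj Pj]]|Hno].
  apply: (IH j) => //; lia.
exists k; split=> // j Pj. case: (leqP k j) => // Hjk.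
exfalso; apply: Hno; by exists j.
Qed.

Lemma ccE x y s : color_changes [:: x, y & s] = (x != y) + color_changes (y :: s).
Proof. by []. Qed.

Lemma cc1 x : color_changes [:: x] = 0. Proof. by []. Qed.

Lemma cc_cat s t x y :
  color_changes (rcons s x ++ y :: t) = color_changes (rcons s x) + (x != y) + color_changes (y :: t).
Proof.
elim: s => [|z s IH]; first by rewrite [rcons _ _]/= cat1s ccE cc1 add0n.
case: s IH => [|w s] IH.
  change (color_changes [:: z, x, y & t] = color_changes [:: z; x] + (x != y) + color_changes (y :: t)).
  rewrite !ccE cc1; lia.
rewrite !rcons_cons !cat_cons ccE -cat_cons -rcons_cons IH ccE addnA -rcons_cons; lia.
Qed.


Lemma cc_catge s t : color_changes s + color_changes t <= color_changes (s ++ t).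
Proof.
case: t => [|y t]; first by rewrite cats0 addn0.
case/lastP: s => [|s x]; first by [].
rewrite cc_cat; lia.
Qed.

Lemma cc_pos s x y : x \in s -> y \in s -> x != y -> 0 < color_changes s.
Proof.
elim: s => [|z s IH] //.
case: s IH => [|w s] IH.
  by rewrite !inE => /eqP -> /eqP ->; rewrite eqxx.
rewrite ccE. case: (eqVneq z w) => [Ezw|Hzw]; last by rewrite /=; lia.
subst w; move=> Hx Hy Hxy; suff H : 0 < color_changes (z :: s) by exact: H.
apply: IH => //.
  by move: Hx; rewrite !inE orbA orbb.
by move: Hy; rewrite !inE orbA orbb.
Qed.

Lemma cc_nseq x n s : color_changes (nseq n x ++ x :: s) = color_changes (x :: s).
Proof.
elim: n s => [|n IH] s //.
rewrite -addn1 nseqD -catA /= IH ccE eqxx //.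
Qed.

Definition Qo (a : nat) : seq nat := nseq a 1 ++ nseq a 1 ++ 2 :: nseq a 2 ++ nseq a 2 ++ [:: 1].

Lemma cc_Qo a : 0 < a -> color_changes (Qo a) = 2.
Proof.
move=> Ha; rewrite /Qo catA -nseqD.
have -> : a + a = (a + a).-1 + 1 by lia.
rewrite nseqD -catA cat1s cc_nseq ccE.
have -> : 2 :: nseq a 2 ++ nseq a 2 ++ [:: 1] = nseq (a + a) 2 ++ 2 :: [:: 1].
  rewrite catA -nseqD -[2 :: _]/(nseq 1 2 ++ _) catA -nseqD.
  rewrite -[[:: 2; 1]]/(nseq 1 2 ++ [:: 1]) catA -nseqD addnC //.
by rewrite cc_nseq ccE.
Qed.

Lemma cc_flexout a k : 0 < a -> color_changes (flatten (nseq k (Qo a))) <= 2 * k.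
Proof.
move=> Ha.
have [q Hq] : exists q, Qo a = 1 :: q by case: a Ha => // a _; eexists.
have [p Hp] : exists p, Qo a = rcons p 1 
  by exists (nseq a 1 ++ nseq a 1 ++ 2 :: nseq a 2 ++ nseq a 2); rewrite -cats1 /Qo -!catA /= -!catA.
elim: k => [|k IH] //. case: k IH => [|k] IH; first by rewrite /= cats0 cc_Qo.
have E : flatten (nseq k.+2 (Qo a)) = Qo a ++ flatten (nseq k.+1 (Qo a)) by [].
have E2 : flatten (nseq k.+1 (Qo a)) = 1 :: (q ++ flatten (nseq k (Qo a))) by rewrite /= Hq.
rewrite E {1}Hp E2 cc_cat -E2 -Hp cc_Qo //; lia.
Qed.


Lemma set_nth_same (T : Type) (x0 : T) ls i y : i < size ls -> nth x0 ls i = y -> set_nth x0 ls i y = ls.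
Proof.
move=> Hi <-; apply: (@eq_from_nth _ x0); first by rewrite size_set_nth; lia.
move=> j _; rewrite nth_set_nth /=; by case: eqP => [->|].
Qed.

Definition pass t := flatten (nseq t [:: Store 0; Retrieve 0]).

Lemma pass_run L W t c u ls d : 0 < L -> 0 < W -> nth [::] ls 0 = [::] -> 0 < size ls ->
  run L W (pass t) (mkState (nseq t c ++ u) ls d) = Some (mkState u ls (d ++ nseq t c)).
Proof.
move=> HL HW Hn Hs; elim: t d => [|t IH] d; first by rewrite cats0.
rewrite /pass [nseq _ _]/= [flatten _]/= -/(pass t) /= Hn HL HW /=.
rewrite nth_set_nth /= set_set_nth eqxx set_nth_same // IH.
by rewrite -cats1 -catA.
Qed.

Definition park_ops a := pass a ++ Store 1 :: pass a ++ [:: Retrieve 1].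

Lemma park_run L W a x y u d : 1 < L -> 0 < W ->
  run L W (park_ops a) (mkState (nseq a x ++ y :: nseq a x ++ u) (nseq L [::]) d)
  = Some (mkState u (nseq L [::]) (d ++ nseq a x ++ nseq a x ++ [:: y])).
Proof.
move=> HL HW.
have H0 : nth [::] (nseq L [::]) 0 = ([::] : seq nat) by rewrite nth_nseq; case: ifP.
have Hs : 0 < size (nseq L ([::] : seq nat)) by rewrite size_nseq; lia.
rewrite /park_ops run_cat pass_run //=; last lia.
have E1 : nth [::] (nseq L [::]) 1 = ([::] : seq nat) by rewrite nth_nseq HL.
rewrite E1 HW ifT /=; last by apply/andP; split.
set ls2 := set_nth _ _ _ _.
have H02 : nth [::] ls2 0 = [::] by rewrite nth_set_nth /=.
have Hs2 : 0 < size ls2 by rewrite size_set_nth; lia.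
rewrite run_cat pass_run //=; last lia.
rewrite ifT; last by [].
rewrite nth_set_nth /= set_set_nth eqxx.
have -> : set_nth [::] (nseq L [::]) 1 [::] = nseq L ([::] : seq nat).
  have E : nth [::] (nseq L [::]) 1 = ([::] : seq nat) by rewrite nth_nseq; case: ifP.
  by rewrite set_nth_same // size_nseq.
by rewrite -cats1 -!catA.
Qed.

Definition Pu (a : nat) : seq nat := nseq a 1 ++ 2 :: nseq a 1 ++ nseq a 2 ++ 1 :: nseq a 2.

Lemma flex_run L W a k d : 1 < L -> 0 < W ->
  run L W (flatten (nseq k (park_ops a ++ park_ops a)))
     (mkState (flatten (nseq k (Pu a))) (nseq L [::]) d)
  = Some (mkState [::] (nseq L [::]) (d ++ flatten (nseq k (Qo a)))).
Proof.
move=> HL HW; elim: k d => [|k IH] d; first by rewrite cats0.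
rewrite [nseq k.+1 _]/= [flatten (_ :: _)]/= run_cat run_cat.
have -> : flatten (nseq k.+1 (Pu a)) = nseq a 1 ++ 2 :: nseq a 1 ++
   (nseq a 2 ++ 1 :: nseq a 2 ++ flatten (nseq k (Pu a))) by rewrite /= /Pu; do 4 rewrite -?catA ?cat_cons.
rewrite park_run // park_run // IH /Qo /=; do 4 rewrite -?catA ?cat_cons ?cat0s.
by [].
Qed.


Lemma flatten_nth (ls : seq (seq nat)) i : i < size ls ->
  flatten ls = flatten (take i ls) ++ nth [::] ls i ++ flatten (drop i.+1 ls).
Proof.
elim: ls i => [|l ls IH] [|i] //= H.
  by rewrite drop0.
by rewrite (IH i H) -!catA.
Qed.

Lemma flatten_set_nth (ls : seq (seq nat)) i x : i < size ls ->
  flatten (set_nth [::] ls i x) = flatten (take i ls) ++ x ++ flatten (drop i.+1 ls).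
Proof.
elim: ls i => [|l ls IH] [|i] //= H; rewrite ?drop0 //.
by rewrite (IH i H) -!catA.
Qed.

Lemma all_set_nth (p : pred (seq nat)) ls i x : i < size ls -> all p ls -> p x ->
  all p (set_nth [::] ls i x).
Proof.
elim: ls i => [|l ls IH] [|i] //= H /andP [Hl Hls] Hx; first by rewrite Hx.
by rewrite Hl IH.
Qed.

Lemma not_all_nth (p : pred (seq nat)) ls : ~~ all p ls -> exists i, i < size ls /\ ~~ p (nth [::] ls i).
Proof.
case/allPn => l Hl Hp; exists (index l ls); rewrite index_mem nth_index //.
Qed.

Lemma nonempty_not_all ls i x : i < size ls -> nth [::] ls i = x -> x != [::] ->
  ~~ all (fun l : seq nat => l == [::]) ls.
Proof.
move=> Hi <- Hx; apply/allPn; exists (nth [::] ls i) => //; exact: mem_nth.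
Qed.

Lemma store_phase L W : forall n s, size (upstream s) = n -> size (lanes s) = L ->
  all (fun l => size l <= W) (lanes s) -> ~~ buffer_full W s -> upstream s != [::] ->
  exists ops s', run_str L W ops (true, s) = Some (false, s') /\ ~~ buffer_empty s' /\
    size (lanes s') = L /\ all (fun l => size l <= W) (lanes s') /\ size (upstream s') < n.
Proof.
elim=> [|n IH] [u ls d] /=; first by case: u.
case: u => [|c u] //= [Hn] Hs Hall Hfull _.
have [i [Hi Hsz]] : exists i, i < size ls /\ size (nth [::] ls i) < W.
  have [i [Hi Hp]] := not_all_nth Hfull; exists i; split => //.
  have H1 := allP Hall _ (mem_nth [::] Hi); simpl in H1, Hp; lia.
set s1 := mkState u (set_nth [::] ls i (rcons (nth [::] ls i) c)) d.
have Hs1 : size (lanes s1) = L by rewrite /= size_set_nth; lia.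
have Hall1 : all (fun l => size l <= W) (lanes s1).
  by apply: all_set_nth => //=; rewrite size_rcons.
have Hne1 : ~~ buffer_empty s1.
  apply: (@nonempty_not_all _ i (rcons (nth [::] ls i) c)).
    by rewrite /= size_set_nth; lia.
    by rewrite /= nth_set_nth /= eqxx.
  by case: (nth _ _ _).
have Hstep : step_str L W (Store i) (true, mkState (c :: u) ls d) =
    Some (~~ (buffer_full W s1 || (u == [::])), s1).
  by rewrite /= -Hs Hi Hsz.
case Hb : (~~ (buffer_full W s1 || (u == [::]))).
  move: (Hb); rewrite negb_or => /andP [Hf1 Hu1].
  have [ops [s' [Hr [H1 [H2 [H3 H4]]]]]] := IH s1 Hn Hs1 Hall1 Hf1 Hu1.
  exists (Store i :: ops), s'; rewrite /= -/s1.
  move: Hstep; rewrite /= Hb => ->. split => //; split => //; split => //; split => //; lia.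
exists [:: Store i], s1; rewrite /= -/s1.
move: Hstep; rewrite /= Hb => ->. split => //; split => //; split => //; split => //; lia.
Qed.

Lemma retrieve_phase L W : forall n s, size (flatten (lanes s)) = n -> size (lanes s) = L ->
  ~~ buffer_empty s ->
  exists ops s', run_str L W ops (false, s) = Some (true, s') /\ buffer_empty s' /\
    upstream s' = upstream s /\ size (lanes s') = L.
Proof.
elim=> [|n IH] [u ls d] /=.
  move=> Hn _ Hne; exfalso; move: Hne; rewrite /buffer_empty /=.
  case/not_all_nth => i [Hi Hp]; move: Hn; rewrite (flatten_nth Hi) !size_cat.
  case: (nth [::] ls i) Hp => [|x y] //= _; lia.
move=> Hn Hs Hne.
have [i [Hi Hp]] := not_all_nth Hne.
rewrite /= in Hi Hp.
case Hl : (nth [::] ls i) Hp => [|c rest] // _.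
set s1 := mkState u (set_nth [::] ls i rest) (rcons d c).
have Hs1 : size (lanes s1) = L by rewrite /= size_set_nth; lia.
have Hn1 : size (flatten (lanes s1)) = n.
  move: Hn; rewrite /= flatten_set_nth // (flatten_nth Hi) Hl !size_cat /=; lia.
have Hstep : step_str L W (Retrieve i) (false, mkState u ls d) = Some (buffer_empty s1, s1).
  by rewrite /= -Hs Hi Hl.
case Hb : (buffer_empty s1).
  exists [:: Retrieve i], s1; rewrite /= -/s1.
  move: Hstep; rewrite /= Hb => ->. by [].
have [ops [s' [Hr [H1 [H2 H3]]]]] := IH s1 Hn1 Hs1 (negbT Hb).
exists (Retrieve i :: ops), s'; rewrite /= -/s1.
move: Hstep; rewrite /= Hb => ->. by [].
Qed.

Lemma str_exists L W : 0 < L -> 0 < W -> forall n s, size (upstream s) <= n ->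
  buffer_empty s -> size (lanes s) = L ->
  exists ops ps, run_str L W ops (true, s) = Some ps /\ finished ps.2.
Proof.
move=> HL HW; elim=> [|n IH] s Hn He Hs.
  exists [::], (true, s); split => //; rewrite /finished He andbT.
  by case: (upstream s) Hn.
case Hu : (upstream s) => [|c u].
  exists [::], (true, s); split => //; by rewrite /finished He Hu.
have Hall : all (fun l => size l <= W) (lanes s).
  apply/allP => l Hl; move/allP: He => /(_ l Hl) /eqP -> //.
have Hnf : ~~ buffer_full W s.
  apply/negP => /allP Hf.
  have H0 : nth [::] (lanes s) 0 \in lanes s by apply: mem_nth; rewrite Hs.
  move/allP: He => /(_ _ H0) /eqP E.
  have := Hf _ H0; rewrite /= E /= => /eqP HW0; by rewrite -HW0 in HW.
have Hune : upstream s != [::] by rewrite Hu.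
have [ops1 [s1 [Hr1 [Hne1 [Hs1 [Hall1 Hlt1]]]]]] :=
  @store_phase L W _ s (erefl _) Hs Hall Hnf Hune.
have [ops2 [s2 [Hr2 [He2 [Hu2 Hs2]]]]] :=
  @retrieve_phase L W _ s1 (erefl _) Hs1 Hne1.
have Hn2 : size (upstream s2) <= n by rewrite Hu2; lia.
have [ops3 [ps [Hr3 Hf3]]] := IH s2 Hn2 He2 Hs2.
exists (ops1 ++ ops2 ++ ops3), ps; split => //.
rewrite run_str_cat Hr1 run_str_cat.
by rewrite Hr2 Hr3.
Qed.


Definition blk (cs : seq nat) m j := take m (drop (j * m) cs).
Definition mixed (x : seq nat) := (1 \in x) && (2 \in x).
Definition mc cs m J := count (fun j => mixed (blk cs m j)) (iota 0 J).

Lemma mcS cs m j : mc cs m j.+1 = mc cs m j + mixed (blk cs m j).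
Proof. by rewrite /mc -addn1 iotaD count_cat /= addn0 add0n. Qed.

Lemma cc_mixed r x : perm_eq r x -> mixed x <= color_changes r.
Proof.
move=> Hp; rewrite /mixed; case: (1 \in x) (perm_mem Hp 1) => //= H1.
case H2 : (2 \in x) => //.
apply: (@cc_pos r 1 2) => //; by rewrite (perm_mem Hp).
Qed.

Lemma size_flatten_le (ls : seq (seq nat)) W : all (fun l => size l <= W) ls ->
  size (flatten ls) <= size ls * W.
Proof.
elim: ls => [|l ls IH] //= /andP [H1 H2]; rewrite size_cat mulSn.
have := IH H2; lia.
Qed.

Lemma size_flatten_full (ls : seq (seq nat)) W : all (fun l => size l == W) ls ->
  size (flatten ls) = size ls * W.
Proof.
elim: ls => [|l ls IH] //= /andP [/eqP H1 H2]; rewrite size_cat mulSn IH //; lia.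
Qed.

Lemma flatten_empty (ls : seq (seq nat)) : all (fun l => l == [::]) ls -> flatten ls = [::].
Proof. by elim: ls => [|l ls IH] //= /andP [/eqP -> H2]; rewrite IH. Qed.

Lemma drop_succ (cs : seq nat) n c u : drop n cs = c :: u -> drop n.+1 cs = u.
Proof. by move=> H; rewrite -add1n -drop_drop H /= drop0. Qed.

Definition Inv L W cs (ps : bool * state) : Prop :=
  let: (b, s) := ps in
  size (lanes s) = L /\ all (fun l => size l <= W) (lanes s) /\
  exists j d0 r, downstream s = d0 ++ r /\ mc cs (L * W) j <= color_changes d0 /\
   (if b then r = [::] /\ upstream s = drop (j * (L * W) + size (flatten (lanes s))) cs /\
          perm_eq (flatten (lanes s)) (take (size (flatten (lanes s))) (drop (j * (L * W)) cs))
    else upstream s = drop (j.+1 * (L * W)) cs /\ perm_eq (r ++ flatten (lanes s)) (blk cs (L * W) j)).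

Lemma step_inv L W cs o ps ps' : Inv L W cs ps -> step_str L W o ps = Some ps' -> Inv L W cs ps'.
Proof.
case: ps => b [u ls d]; case: o => i; case: b => //=.
-
  case: u => [|c u] //.
  case Hc : ((i < L) && (size (nth [::] ls i) < W)) => //.
  move/andP: Hc => [Hi Hsz].
  move=> [Hs [Hall [j [d0 [r [Hd [Hmc [Hr [/esym Hu Hp]]]]]]]]] [<-].
  set ls1 := set_nth _ _ _ _.
  have Hi' : i < size ls by rewrite Hs.
  have Hs1 : size ls1 = L by rewrite size_set_nth; lia.
  have Hall1 : all (fun l => size l <= W) ls1 by apply: all_set_nth => //=; rewrite size_rcons.
  set t := size (flatten ls).
  have Hf1 : size (flatten ls1) = t.+1.
    by rewrite /t /ls1 flatten_set_nth // (flatten_nth Hi') !size_cat size_rcons; lia.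
  have Hp1 : perm_eq (flatten ls1) (take t.+1 (drop (j * (L * W)) cs)).
    rewrite -addn1 takeD drop_drop addnC Hu /=.
    apply/permP => p; move/permP: Hp => /(_ p); rewrite count_cat -/t.
    rewrite /ls1 flatten_set_nth // (flatten_nth Hi') !count_cat -cats1 count_cat take0 /=; lia.
  have Hu1 : u = drop (j * (L * W) + t.+1) cs by rewrite addnS (drop_succ Hu).
  have Hle : t.+1 <= L * W by rewrite -Hf1 -Hs1; exact: size_flatten_le.
  split => //; split => //; exists j, d0, r; split => //; split => //.
  case: ifP => Hb.
    by rewrite Hf1; split.
  move/negbFE: Hb => /orP Hb; rewrite Hr /=.
  have [Ht Hdrop] : take t.+1 (drop (j * (L * W)) cs) = blk cs (L * W) j /\
                    drop (j * (L * W) + t.+1) cs = drop (j.+1 * (L * W)) cs.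
    case: Hb => [Hfull|/eqP Hu0].
      have := size_flatten_full Hfull; rewrite /= Hs1 Hf1 => ->.
      by rewrite mulSn addnC.
    move: Hu1; rewrite Hu0 => /esym Hd0.
    have Hsz0 : size cs <= j * (L * W) + t.+1.
      by move: (f_equal size Hd0); rewrite size_drop /=; lia.
    split.
      rewrite /blk take_oversize; last by rewrite size_drop; lia.
      rewrite take_oversize //; rewrite size_drop; lia.
    rewrite Hd0 drop_oversize // mulSn; lia.
  split; first by rewrite Hu1 Hdrop.
  by rewrite -Ht.
-
  case Hi : (i < L) => //.
  case Hl : (nth [::] ls i) => [|c rest] //.
  move=> [Hs [Hall [j [d0 [r [Hd [Hmc [Hu Hp]]]]]]]] [<-].
  set ls1 := set_nth _ _ _ _.
  have Hi' : i < size ls by rewrite Hs.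
  have Hs1 : size ls1 = L by rewrite size_set_nth; lia.
  have Hall1 : all (fun l => size l <= W) ls1.
    apply: all_set_nth => //=.
    by have := allP Hall _ (mem_nth [::] Hi'); rewrite Hl /=; lia.
  have Hp1 : perm_eq (rcons r c ++ flatten ls1) (blk cs (L * W) j).
    apply/permP => p; move/permP: Hp => /(_ p) <-.
    rewrite /ls1 flatten_set_nth // (flatten_nth Hi') Hl -cats1 !count_cat /=; lia.
  rewrite /Inv /=.
  split => //; split => //.
  case Hb : (buffer_empty {| upstream := u; lanes := ls1; downstream := rcons d c |}).
    have He : flatten ls1 = [::] by apply: flatten_empty; exact: Hb.
    exists j.+1, (d0 ++ rcons r c), [::]; rewrite cats0 Hd rcons_cat; split => //.
    split.
      rewrite mcS; move: Hp1; rewrite He cats0 => /cc_mixed H.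
      have := cc_catge d0 (rcons r c); lia.
    by rewrite He addn0 take0.
  by exists j, d0, (rcons r c); rewrite Hd rcons_cat.
Qed.


Lemma nth_cons' (x : nat) s n : nth 0 (x :: s) n = if n == 0 then x else nth 0 s n.-1.
Proof. by case: n. Qed.

Lemma nthPu a r : nth 0 (Pu a) r =
  if r < a then 1 else if r == a then 2 else if r <= 2 * a then 1 else if r <= 3 * a then 2
  else if r == 3 * a + 1 then 1 else if r < 4 * a + 2 then 2 else 0.
Proof.
rewrite /Pu !(nth_cat, size_cat, size_nseq, nth_nseq, nth_cons') /=.
repeat (case: ifPn => ?); try lia.
Qed.

Lemma size_Pu a : size (Pu a) = 4 * a + 2.
Proof. rewrite /Pu; do 3 rewrite ?size_cat ?size_nseq /=; lia. Qed.

Lemma nth_cs a k i : i < k * (4 * a + 2) ->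
  nth 0 (flatten (nseq k (Pu a))) i = nth 0 (Pu a) (i %% (4 * a + 2)).
Proof.
elim: k i => [|k IH] i //= Hi.
rewrite nth_cat size_Pu; case: ifPn => H.
  by rewrite modn_small.
rewrite IH; last by rewrite mulSn in Hi; lia.
have Hle : 4 * a + 2 <= i by lia.
by rewrite -{2}(subnK Hle) modnDr.
Qed.

Lemma modT y T : 0 < T -> y <= T -> y %% T = if y == T then 0 else y.
Proof.
move=> HT Hy; case: eqP => [->|Hne]; first by rewrite modnn.
rewrite modn_small //; lia.
Qed.

Ltac fin E a :=
  rewrite !E !modT; try lia; rewrite !(fun_if (nth 0 (Pu a))) !nthPu; repeat split; try lia;
  repeat (case: ifPn => ?); lia.

Lemma win a x : 0 < a -> exists i1 i2, i1 <= a /\ i2 <= a /\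
  nth 0 (Pu a) ((x + i1) %% (4 * a + 2)) = 1 /\ nth 0 (Pu a) ((x + i2) %% (4 * a + 2)) = 2.
Proof.
move=> Ha.
have E : forall i, (x + i) %% (4 * a + 2) = (x %% (4 * a + 2) + i) %% (4 * a + 2).
  by move=> i; rewrite modnDml.
have Hr : x %% (4 * a + 2) < 4 * a + 2 by apply: ltn_pmod; lia.
move: (x %% (4 * a + 2)) E Hr => r E Hr.
case: (ltnP r a) => H1.
  exists 0, (a - r); fin E a.
case: (ltnP a r) => H2; last first.
  exists 1, 0; fin E a.
case: (ltnP (2 * a) r) => H3; last first.
  exists 0, (2 * a + 1 - r); fin E a.
case: (ltnP (3 * a) r) => H4; last first.
  exists (3 * a + 1 - r), 0; fin E a.
case: (ltnP (3 * a + 1) r) => H5; last first.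
  exists 0, 1; fin E a.
exists (4 * a + 2 - r), 0; fin E a.
Qed.


Lemma run_inv L W cs ops ps ps' : Inv L W cs ps -> run_str L W ops ps = Some ps' -> Inv L W cs ps'.
Proof.
elim: ops ps => [|o os IH] ps /=; first by move=> H [<-].
case E : (step_str L W o ps) => [ps1|] // H; apply: IH; exact: step_inv H E.
Qed.

Lemma flatten_nseq_nil L : flatten (nseq L ([::] : seq nat)) = [::].
Proof. by elim: L. Qed.

Lemma str_lower L W cs out : str_solution L W cs out ->
  exists J, size cs <= J * (L * W) /\ mc cs (L * W) J <= color_changes out.
Proof.
case=> ops [[b s] [Hr [Hf Ho]]].
have I0 : Inv L W cs (true, init_state L cs).
  rewrite /Inv /init_state /= size_nseq flatten_nseq_nil; split => //; split.
    by rewrite all_nseq /= orbT.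
  by exists 0, [::], [::]; rewrite /= drop0 take0.
have := run_inv I0 Hr; rewrite /Inv /=.
move: Hf Ho; rewrite /finished /= => /andP [/eqP Hu He] <-.
have Hfl : flatten (lanes s) = [::] by apply: flatten_empty.
move=> [_ [_ [j [d0 [r [Hd [Hmc Hb]]]]]]].
clear Hr; case: b Hb => [[Hr0 [Hus Hp]]|[Hus Hp]].
  exists j; rewrite Hd Hr0 cats0; split => //.
  move: Hus; rewrite Hu Hfl addn0 => /(f_equal size); rewrite size_drop /=; lia.
exists j.+1; split.
  move: Hus; rewrite Hu => /(f_equal size); rewrite size_drop /=; lia.
rewrite mcS Hd; move: Hp; rewrite Hfl cats0 => /cc_mixed H.
have := cc_catge d0 r; lia.
Qed.

Lemma mc_lower cs m K : (forall j, j < K -> mixed (blk cs m j)) ->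
  forall J, minn J K <= mc cs m J.
Proof.
move=> HK; elim=> [|J IH]; first by rewrite /mc /=; lia.
rewrite mcS; case: (ltnP J K) => H.
  rewrite HK //; lia.
lia.
Qed.

Lemma blk_mixed a k j : 0 < a -> j.+1 * a.+1 <= k * (4 * a + 2) ->
  mixed (blk (flatten (nseq k (Pu a))) a.+1 j).
Proof.
move=> Ha Hj.
set cs := flatten (nseq k (Pu a)).
have Hsz : size cs = k * (4 * a + 2).
  rewrite /cs size_flatten /shape map_nseq size_Pu.
  by elim: k {Hj cs} => [|k IH] //=; rewrite IH mulSn.
have Hsb : size (blk cs a.+1 j) = a.+1.
  rewrite /blk size_take size_drop Hsz; rewrite mulSn in Hj.
  case: ifP => //; lia.
have Hn : forall i, i <= a -> nth 0 cs (j * a.+1 + i) \in blk cs a.+1 j.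
  move=> i Hi.
  have <- : nth 0 (blk cs a.+1 j) i = nth 0 cs (j * a.+1 + i).
    by rewrite /blk nth_take // nth_drop.
  apply: mem_nth; rewrite Hsb; lia.
have [i1 [i2 [H1 [H2 [E1 E2]]]]] := win (j * a.+1) Ha.
rewrite /mixed; apply/andP; split.
  rewrite -E1 -(@nth_cs a k); first exact: Hn.
  rewrite mulSn in Hj; lia.
rewrite -E2 -(@nth_cs a k); first exact: Hn.
rewrite mulSn in Hj; lia.
Qed.

Lemma size_cs a k : size (flatten (nseq k (Pu a))) = k * (4 * a + 2).
Proof.
rewrite size_flatten /shape map_nseq size_Pu.
by elim: k => [|k IH] //=; rewrite IH mulSn.
Qed.

Theorem theorem1 (L C W : nat) (hL : 1 < L) (hC : 1 < C) (hW : 1 < W) :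
  forall n : nat, exists cs : seq nat,
    all (fun c => (1 <= c <= C)%N) cs /\
    exists kflex kstr : nat,
      is_min_changes (flex_solution L W cs) kflex /\
      is_min_changes (str_solution L W cs) kstr /\
      kflex + n <= kstr.
Proof.
move=> n.
have H4 : 4 <= L * W by have := leq_mul hL hW.
set a := (L * W).-1.
have Hm : L * W = a.+1 by rewrite /a; lia.
have Ha : 0 < a by lia.
set cs := flatten (nseq n (Pu a)).
exists cs; split.
  have HP : all (fun c => (1 <= c <= C)%N) (Pu a).
    rewrite /Pu !all_cat /= !all_cat /= !all_nseq /=.
    have H0C : 0 < C by lia.
    by rewrite hC H0C !orbT.
  have Hall : forall k, all (fun c => (1 <= c <= C)%N) (flatten (nseq k (Pu a))).
    by elim => [|k IH] //=; rewrite all_cat HP.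
  exact: Hall.
have Hflex : flex_solution L W cs (flatten (nseq n (Qo a))).
  exists (flatten (nseq n (park_ops a ++ park_ops a))),
    (mkState [::] (nseq L [::]) ([::] ++ flatten (nseq n (Qo a)))).
  split; first by apply: flex_run => //; lia.
  by rewrite /finished /buffer_empty /= all_nseq /= orbT.
have [ops [ps [Hr Hf]]] : exists ops ps, run_str L W ops (true, init_state L cs) = Some ps /\ finished ps.2.
  apply: (@str_exists L W _ _ (size cs)) => //; try lia.
    by rewrite /buffer_empty /= all_nseq /= orbT.
  by rewrite /= size_nseq.
have Hstr : str_solution L W cs (downstream ps.2) by exists ops, ps.
have [kf [[ofl [Hof Hcf]] Hminf]] := @ex_min (fun k => exists out, flex_solution L W cs out /\ color_changes out = k)
   (ex_intro _ _ (ex_intro _ _ (conj Hflex erefl))).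
have [ks [[os [Hos Hcs]] Hmins]] := @ex_min (fun k => exists out, str_solution L W cs out /\ color_changes out = k)
   (ex_intro _ _ (ex_intro _ _ (conj Hstr erefl))).
exists kf, ks; split.
  split; first by exists ofl.
  by move=> out Ho; apply: Hminf; exists out.
split.
  split; first by exists os.
  by move=> out Ho; apply: Hmins; exists out.
have Hkf : kf <= 2 * n.
  apply: leq_trans (cc_flexout n Ha); apply: Hminf; by exists (flatten (nseq n (Qo a))).
have [J [HJ HmcJ]] := str_lower Hos.
have HK : forall j, j < 3 * n -> mixed (blk cs (L * W) j).
  move=> j Hj; rewrite Hm; apply: blk_mixed => //.
  have : j.+1 * a.+1 <= 3 * n * a.+1 by rewrite leq_mul2r; apply/orP; right.
  have : 3 * n * a.+1 <= n * (4 * a + 2).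
    rewrite mulnAC [n * _]mulnC leq_mul2r; apply/orP; right; lia.
  lia.
have := mc_lower HK J.
rewrite /cs size_cs Hm in HJ.
have HJ3 : 3 * n <= J.
  case: (leqP (3 * n) J) => // HJl.
  have : J * a.+1 < 3 * n * a.+1 by rewrite ltn_pmul2r.
  have : 3 * n * a.+1 <= n * (4 * a + 2).
    rewrite mulnAC [n * _]mulnC leq_mul2r; apply/orP; right; lia.
  lia.
lia.
Qed.
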